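(* Let $\mathcal{U}=[c,d]\subset\mathbb{R}$ with $c<d$ and $c\neq -d$. Let $A,A'\in GL(n)$ each have $n$ distinct eigenvalues, let $b,b'\in\mathbb{R}^n$, and assume $b^T\eta\neq 0$ for every left eigenvector $\eta\in\mathbb{C}^n$ of $A$. Suppose the systems $x[i+1]=Ax[i]+bu[i]$ and $x[i+1]=A'x[i]+b'u[i]$, both with $x[0]=0$ and $u[i]\in\mathcal{U}$, have identical reachable sets $\mathcal{R}(j,0)$ for all $j\in\mathbb{N}$. Then $(A,b)=(A',b')$.
   Context: For a system $x[i+1]=Ax[i]+bu[i]$, $x[0]=0$, $u[i]\in\mathcal{U}$, the reachable set at time $j$ is $\mathcal{R}(j,0)=\{\phi_u(j;0)\mid u:\mathbb{Z}_{\ge0}\to\mathcal{U}\}$, where $\phi_u(\cdot;0)$ is the trajectory from initial state $0$ under input sequence $u$. $GL(n)$ is the set of invertible real $n\times n$ matrices. A left eigenvector of $A$ is a nonzero $\eta\in\mathbb{C}^n$ with $\eta^TA=\lambda\eta^T$ for some $\lambda\in\mathbb{C}$; $b^T\eta=\sum_j b_j\eta_j$. *)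

(* Defs.v *)
From HB Require Import structures.
From mathcomp Require Import all_boot all_order all_algebra.
From mathcomp Require Import reals complex.
Set Implicit Arguments. Unset Strict Implicit. Unset Printing Implicit Defensive.
Import Order.TTheory GRing.Theory Num.Theory.
Local Open Scope ring_scope.
Local Open Scope complex_scope.

Fixpoint traj (R : realType) (n : nat) (A : 'M[R]_n) (b : 'cV[R]_n)
  (u : nat -> R) (j : nat) : 'cV[R]_n :=
  match j with
  | 0 => 0
  | j'.+1 => A *m traj A b u j' + u j' *: b
  end.

Definition reach (R : realType) (n : nat) (A : 'M[R]_n) (b : 'cV[R]_n)
  (c d : R) (j : nat) : 'cV[R]_n -> Prop :=
  fun x => exists u : nat -> R, (forall i, c <= u i <= d) /\ x = traj A b u j.

Definition cplx_mx (R : realType) (m n : nat) (M : 'M[R]_(m, n)) : 'M[R[i]]_(m, n) :=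
  map_mx (fun x : R => x%:C) M.

Definition distinct_eigs (R : realType) (n : nat) (A : 'M[R]_n) : Prop :=
  exists s : seq R[i], [/\ size s = n, uniq s & all (eigenvalue (cplx_mx A)) s].

Definition left_eig_nondeg (R : realType) (n : nat) (A : 'M[R]_n) (b : 'cV[R]_n) : Prop :=
  forall (eta : 'rV[R[i]]_n) (lam : R[i]),
    eta != 0 -> eta *m cplx_mx A = lam *: eta -> (eta *m cplx_mx b) 0 0 != 0.

(* Main.v *)
Require Import Defs.
From HB Require Import structures.
From mathcomp Require Import all_boot all_order all_algebra.
From mathcomp Require Import reals complex.
From mathcomp Require Import ring lra.
Import Order.TTheory GRing.Theory Num.Theory.
Local Open Scope ring_scope.
Section P2a.
Variables (F : fieldType) (n : nat) (A : 'M[F]_n) (b : 'cV[F]_n).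

Definition kry := \matrix_(i < n, k < n) (iter k (mulmx A) b) i 0.

Lemma col_kry (k : 'I_n) : col k kry = iter k (mulmx A) b.
Proof. by apply/matrixP => i j; rewrite !mxE ord1. Qed.

Lemma kry0 m (M : 'M_(m, n)) : M *m kry = 0 <-> forall k : 'I_n, M *m iter k (mulmx A) b = 0.
Proof.
split.
  by move=> h k; rewrite -col_kry colE mulmxA h mul0mx.
move=> h; apply/matrixP => i k.
have e := h k; rewrite -col_kry colE mulmxA -colE in e.
by move/matrixP/(_ i 0): e; rewrite !mxE.
Qed.


End P2a.
Arguments kry0 {F n A b m M}.
Arguments col_kry {F n A b}.

Lemma iter_pow (F : fieldType) n (A : 'M[F]_n) (b : 'cV[F]_n) k : iter k (mulmx A) b = A ^+ k *m b.
Proof.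
elim: k => [|k IH] /=; first by rewrite expr0 mul1mx.
by rewrite IH exprS -mulmxE mulmxA.
Qed.

Lemma kry_CH (F : fieldType) n (A : 'M[F]_n) (b : 'cV[F]_n) m (M : 'M_(m, n)) : (forall k : 'I_n, M *m iter k (mulmx A) b = 0) ->
  M *m iter n (mulmx A) b = 0.
Proof.
case: n A b M => [|n'] A0 b0 M h.
  by apply/matrixP => i j; rewrite !mxE big_ord0.
have CH := Cayley_Hamilton A0.
set p := char_poly A0 in CH.
have sp : size p = n'.+2 by rewrite size_char_poly.
have lp : p`_n'.+1 = 1.
  by have /monicP := char_poly_monic A0; rewrite lead_coefE sp.
move: CH; rewrite -(coefK p) sp poly_def.
rewrite linear_sum /= => CH.
have : M *m (\sum_(i < n'.+2) horner_mx A0 (p`_i *: 'X^i)) *m b0 = 0.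
  by rewrite CH mulmx0 mul0mx.
rewrite big_ord_recr /= mulmxDr mulmxDl.
rewrite (_ : M *m (\sum_(i < n'.+1) _) *m b0 = 0) ?add0r.
  by move=> <-; rewrite linearZ /= rmorphXn /= horner_mx_X lp scale1r -mulmxA -iter_pow.
rewrite mulmx_sumr mulmx_suml big1 // => i _.
rewrite linearZ /= rmorphXn /= horner_mx_X -scalemxAr -scalemxAl -mulmxA -iter_pow.
by rewrite h scaler0.
Qed.

Section P2.
Variables (F : closedFieldType) (n : nat) (A : 'M[F]_n) (b : 'cV[F]_n).
Local Notation kry := (@kry F n A b).
Lemma stable_eig {r} {B : 'M[F]_(r, n)} : (0 < r)%N -> row_free B -> (B *m A <= B)%MS ->
  exists eta : 'rV_n, exists lam, [/\ eta != 0, eta *m A = lam *: eta & (eta <= B)%MS].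
Proof.
case: r B => [//|r] B _ fB /submxP[D eD].
have : size (char_poly D) != 1 by rewrite size_char_poly.
move/closed_rootP => [a ra].
rewrite -eigenvalue_root_char in ra; move/eigenvalueP: ra => [x xD x0].
exists (x *m B), a; split.
- by rewrite mulmx_free_eq0.
- by rewrite -mulmxA eD mulmxA xD -scalemxAl.
- exact: submxMl.
Qed.

Lemma kry_unit : (forall (eta : 'rV_n) lam, eta != 0 -> eta *m A = lam *: eta ->
   (eta *m b) 0 0 != 0) -> kry \in unitmx.
Proof.
move=> H; apply/negPn/negP => nu.
set L := kermx kry.
have rL : (0 < \rank L)%N.
  rewrite mxrank_ker subn_gt0 ltn_neqAle rank_leq_col andbT.
  by move: nu; rewrite -row_full_unit /row_full.
have npos : (0 < n)%N by apply: leq_trans rL (rank_leq_col L).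
have Lker : forall k : 'I_n, L *m iter k (mulmx A) b = 0.
  by apply/kry0; exact: mulmx_ker.
have stab : (L *m A <= L)%MS.
  apply/sub_kermxP/kry0 => k.
  rewrite -mulmxA -[A *m _]/(iter k.+1 (mulmx A) b).
  have [lt|ge] := ltnP k.+1 n; first exact: (Lker (Ordinal lt)).
  have -> : k.+1 = n by apply/eqP; rewrite eqn_leq ge ltn_ord.
  exact: kry_CH.
have stab' : (row_base L *m A <= row_base L)%MS.
  apply: submx_trans (submxMr _ _) _; first by rewrite eq_row_base.
  by rewrite eq_row_base.
have [eta [lam [e0 eA eB]]] := stable_eig rL (row_base_free L) stab'.
rewrite eq_row_base in eB.
move/sub_kermxP: eB; move/kry0/(_ (Ordinal npos)) => /= e.
by move: (H eta lam e0 eA); rewrite e mxE eqxx.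
Qed.
End P2.

Section P1.
Variables (R : realType) (n : nat) (c d : R).
Implicit Types (A : 'M[R]_n) (b : 'cV[R]_n) (y : 'rV[R]_n) (u : nat -> R).

Definition ff (t : R) := (if 0 <= t then d else c) * t.
Definition vk (A : 'M[R]_n) (b : 'cV[R]_n) k := iter k (mulmx A) b.
Definition GG A b j (y : 'rV[R]_n) := \sum_(k < j) ff ((y *m vk A b k) 0 0).

Lemma ff_ub (u t : R) : c <= u <= d -> u * t <= ff t.
Proof.
move=> /andP[cu ud]; rewrite /ff; case: ifP => ht.
  by rewrite ler_wpM2r.
by move/negbT: ht; rewrite -ltNge => ht; nra.
Qed.

Lemma ff_diff t : c < d -> ff t - ff (- t) = (c + d) * t.
Proof.
move=> cd; rewrite /ff oppr_ge0; case: (ltrgtP 0 t) => h.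
- by ring.
- by ring.
- by rewrite -h; ring.
Qed.

Lemma traj_ext A b u (v : nat -> R) j : (forall i, (i < j)%N -> u i = v i) -> traj A b u j = traj A b v j.
Proof.
elim: j => [//|j IH] H /=; rewrite IH ?H // => i hi; apply: H; exact: ltnW.
Qed.

Lemma GG_S A b j y : GG A b j.+1 y = ff ((y *m b) 0 0) + GG A b j (y *m A).
Proof.
rewrite /GG big_ord_recl /=; congr (_ + _); apply: eq_bigr => i _.
by rewrite /vk /= add0n mulmxA.
Qed.

Lemma GG_Sr A b j y : GG A b j.+1 y = GG A b j y + ff ((y *m vk A b j) 0 0).
Proof. by rewrite /GG big_ord_recr. Qed.

Lemma traj_S A b u j y : (y *m traj A b u j.+1) 0 0 =
  ((y *m A) *m traj A b u j) 0 0 + u j * (y *m b) 0 0.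
Proof. by rewrite /= mulmxDr mulmxA -scalemxAr !mxE. Qed.

Lemma traj_ub A b u : (forall i, c <= u i <= d) -> forall j y,
  (y *m traj A b u j) 0 0 <= GG A b j y.
Proof.
move=> hu; elim=> [|j IH] y.
  by rewrite /= mulmx0 mxE /GG big_ord0.
rewrite traj_S GG_S addrC; apply: lerD; [exact: ff_ub | exact: IH].
Qed.

Lemma traj_ach A b : c < d -> forall j y, exists u, (forall i, c <= u i <= d) /\
  (y *m traj A b u j) 0 0 = GG A b j y.
Proof.
move=> cd; elim=> [|j IH] y.
  exists (fun _ => c); split; first by move=> _; rewrite lexx ltW.
  by rewrite /= mulmx0 mxE /GG big_ord0.
have [u [hu e]] := IH (y *m A).
exists (fun i => if i == j then (if 0 <= (y *m b) 0 0 then d else c) else u i).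
split.
  move=> i; case: ifP => _; last exact: hu.
  by case: ifP => _; rewrite lexx ltW.
rewrite traj_S GG_S eqxx.
rewrite (@traj_ext _ _ _ u); last by move=> i hi; rewrite ifF // ltn_eqF.
by rewrite e addrC.
Qed.

Lemma GG_eq A b A' b' (cd : c < d) :
  (forall j, reach A b c d j = reach A' b' c d j) -> forall j y, GG A b j y = GG A' b' j y.
Proof.
move=> H.
suff: forall A b A' b', (forall j, reach A b c d j = reach A' b' c d j) ->
     forall j y, GG A b j y <= GG A' b' j y.
  by move=> h j y; apply/eqP; rewrite eq_le !h // => k; rewrite H.
move=> {}A {}b {}A' {}b' {}H j y.
have [u [hu e]] := traj_ach A b cd j y.
have : reach A b c d j (traj A b u j) by exists u.
rewrite H => -[u' [hu' e']]; rewrite -e e'; exact: traj_ub.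
Qed.

Lemma vk_eq A b (A' : 'M[R]_n) (b' : 'cV[R]_n) : c < d -> c != - d ->
  (forall j, reach A b c d j = reach A' b' c d j) -> forall k, vk A b k = vk A' b' k.
Proof.
move=> cd ncd H k.
have hf : forall y, ff ((y *m vk A b k) 0 0) = ff ((y *m vk A' b' k) 0 0).
  move=> y; have := GG_eq _ _ _ _ cd H k.+1 y; rewrite !GG_Sr (GG_eq _ _ _ _ cd H); exact: addrI.
apply/matrixP => i j; rewrite [j]ord1.
have h1 := hf ('e_i); have h2 := hf (- 'e_i).
move: h2; rewrite !mulNmx -!rowE !mxE => h2.
move: h1; rewrite -!rowE !mxE => h1.
have : (c + d) * vk A b k i 0 = (c + d) * vk A' b' k i 0.
  by rewrite -!ff_diff // h1 h2.
by move/mulfI; apply; rewrite addr_eq0.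
Qed.
End P1.

Lemma cplx_iter (R : realType) n (A : 'M[R]_n) (b : 'cV[R]_n) k :
  cplx_mx (iter k (mulmx A) b) = iter k (mulmx (cplx_mx A)) (cplx_mx b).
Proof.
elim: k => [//|k IH] /=; rewrite -IH.
by change (map_mx (real_complex R) (A *m iter k (mulmx A) b) =
  map_mx (real_complex R) A *m map_mx (real_complex R) (iter k (mulmx A) b)); rewrite map_mxM.
Qed.

Theorem theorem2 (R : realType) (n : nat) (c d : R)
  (A A' : 'M[R]_n) (b b' : 'cV[R]_n) :
  c < d -> c != - d ->
  A \in unitmx -> A' \in unitmx ->
  distinct_eigs A -> distinct_eigs A' ->
  left_eig_nondeg A b ->
  (forall j : nat, reach A b c d j = reach A' b' c d j) ->
  A = A' /\ b = b'.
Proof.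
move=> cd ncd _ _ _ _ hnd H.
have hv := @vk_eq R n c d A b A' b' cd ncd H.
have bb : b = b' by apply: (hv 0%N).
split; last exact: bb.
have Ku : kry _ _ A b \in unitmx.
  have := @kry_unit _ _ _ _ hnd.
  have -> : kry _ _ (cplx_mx A) (cplx_mx b) = map_mx (real_complex R) (kry _ _ A b).
    apply/matrixP => i k; rewrite !mxE -cplx_iter.
    by rewrite /cplx_mx mxE.
  by rewrite map_unitmx.
have E : forall k : 'I_n, A *m col k (kry _ _ A b) = A' *m col k (kry _ _ A b).
  move=> k; rewrite col_kry.
  have h1 := hv k.+1; have h2 := hv k.
  rewrite /vk /= in h1 h2.
  by rewrite h1 h2.
rewrite -(mulmxK Ku A) -(mulmxK Ku A'); congr (_ *m _).
apply/matrixP => i k; move/matrixP/(_ i 0): (E k).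
by rewrite !colE !mulmxA -!colE !mxE.
Qed.
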